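(* Let $\bm{\mu}\in X^{\mathcal{L}(\mathcal{T})}$ with $V_{s_0}(\bm{\mu})\neq\theta$. For every leaf $\ell\in\mathcal{L}(\mathcal{T})$ with $w^{s_0}_\ell(\bm{\mu})>0$, we have $\mu_\ell>\theta$ if $a_{s_0}(\bm{\mu})=$'win' and $\mu_\ell<\theta$ if $a_{s_0}(\bm{\mu})=$'lose'.
   Context: $\mathcal{T}$ is a finite rooted tree with node set $S$, root $s_0$, children $\mathcal{C}(s)$, leaves $\mathcal{L}(\mathcal{T})$, and $\mathcal{D}(s)$ the leaves descending from $s$; internal labels $L(s)\in\{\text{MAX},\text{MIN}\}$. $X\subseteq\mathbb{R}$ mean-parameter set of a one-parameter exponential family; $d(x,y)$ KL divergence between members with means $x,y$ (so $d(x,y)\ge0$ with equality iff $x=y$); threshold $\theta\in X$. $V_s(\bm{\mu})=\mu_s$ at leaves, max/min of children's values at MAX/MIN nodes; $a_s(\bm{\mu})=$'win' iff $V_s(\bm{\mu})\ge\theta$. Recursive weights: $a^*=a_{s_0}(\bm{\mu})$; $P=$MAX, $Q=$MIN if $a^*=$'win', swapped if 'lose'. Leaf $s$: $w^s_s=1$, $d_s=d(\mu_s,\theta)$ if ($a^*=$'win', $\mu_s\ge\theta$) or ($a^*=$'lose', $\mu_s<\theta$), else $0$. $L(s)=P$: $d_s=\max_c d_c$, fixed $c^*(s)\in\arg\max_c d_c$, and if $d_s>0$: $w^s_\ell=w^{c^*(s)}_\ell$ for $\ell\in\mathcal{D}(c^*(s))$, $0$ for other $\ell\in\mathcal{D}(s)$.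 $L(s)=Q$ and all $d_c>0$: $d_s=(\sum_c1/d_c)^{-1}$, $w^s_\ell=\frac{w^c_\ell/d_c}{\sum_{c'}1/d_{c'}}$ for $\ell\in\mathcal{D}(c)$. $L(s)=Q$ otherwise: $d_s=0$. Internal $s$ with $d_s=0$: $\bm{w}^s$ a fixed arbitrary probability vector on $\mathcal{D}(s)$. *)

(* Defs.v *)
From Stdlib Require Import Reals List Arith.
Import ListNotations.
Open Scope R_scope.

Inductive label := MAX | MIN.

Definition label_eqb (a b : label) : bool :=
  match a, b with MAX, MAX | MIN, MIN => true | _, _ => false end.

Inductive tree := Leaf : nat -> tree | Node : label -> list tree -> tree.

(** D(s): the leaves descending from s. *)
Fixpoint leaves (t : tree) : list nat :=
  match t with
  | Leaf l => [l]
  | Node _ cs => flat_map leaves cs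
  end.

Fixpoint subtrees (t : tree) : list tree :=
  match t with
  | Leaf l => [Leaf l]
  | Node b cs => Node b cs :: flat_map subtrees cs
  end.

Fixpoint well_formed (t : tree) : Prop :=
  match t with
  | Leaf _ => True
  | Node _ cs => cs <> [] /\ (fix wf_list (l : list tree) : Prop :=
                              match l with
                              | [] => True
                              | c :: l' => well_formed c /\ wf_list l'
                              end) cs
  end.

Definition maxlist (l : list R) : R :=
  match l with [] => 0 | x :: l' => fold_left Rmax l' x end.
Definition minlist (l : list R) : R :=
  match l with [] => 0 | x :: l' => fold_left Rmin l' x end.

Fixpoint value (mu : nat -> R) (t : tree) : R :=
  match t with
  | Leaf l => mu l
  | Node MAX cs => maxlist (map (value mu) cs)
  | Node MIN cs => minlist (map (value mu) cs)
  end.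

Definition rpos (x : R) : bool := if Rlt_dec 0 x then true else false.

Definition Plab (win : bool) : label := if win then MAX else MIN.

(** d_s, where [win] encodes a* = 'win', [dKL] is the divergence d,
    [theta] the threshold. *)
Fixpoint dval (dKL : R -> R -> R) (theta : R) (mu : nat -> R) (win : bool)
  (t : tree) : R :=
  match t with
  | Leaf l =>
      if win then (if Rle_dec theta (mu l) then dKL (mu l) theta else 0)
      else (if Rlt_dec (mu l) theta then dKL (mu l) theta else 0)
  | Node b cs =>
      let ds := map (dval dKL theta mu win) cs in
      if label_eqb b (Plab win) then maxlist ds
      else if forallb rpos ds then / fold_right Rplus 0 (map Rinv ds)
      else 0
  end.

(** The weights w^s (as functions on leaf labels; only the values on
    D(s) are meaningful).  [cstar s] is the fixed index of the chosen
    child c*(s) in the argmax at a P-node s, and [arb s] is the fixed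
    arbitrary probability vector used at internal nodes with d_s = 0. *)
Fixpoint weights (dKL : R -> R -> R) (theta : R) (mu : nat -> R) (win : bool)
  (cstar : tree -> nat) (arb : tree -> nat -> R) (t : tree) : nat -> R :=
  match t with
  | Leaf l => fun _ => 1
  | Node b cs =>
      let ws := map (weights dKL theta mu win cstar arb) cs in
      let ds := map (dval dKL theta mu win) cs in
      let ls := map leaves cs in
      let dS := dval dKL theta mu win (Node b cs) in
      if Rlt_dec 0 dS then
        if label_eqb b (Plab win) then
          fun l =>
            if in_dec Nat.eq_dec l (nth (cstar (Node b cs)) ls [])
            then nth (cstar (Node b cs)) ws (fun _ => 0) l else 0
        else
          (* Q-node, all d_c > 0 *)
          fun l =>
            fold_right Rplus 0
              (map (fun p : (list nat * (nat -> R)) * R =>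
                      let '((lc, wc), dc) := p in
                      if in_dec Nat.eq_dec l lc then wc l / dc else 0)
                   (combine (combine ls ws) ds))
            / fold_right Rplus 0 (map Rinv ds)
      else arb (Node b cs)
  end.

Definition cstar_valid (dKL : R -> R -> R) (theta : R) (mu : nat -> R)
  (win : bool) (cstar : tree -> nat) (root : tree) : Prop :=
  forall b cs, In (Node b cs) (subtrees root) -> b = Plab win ->
    (cstar (Node b cs) < length cs)%nat /\
    forall c, In c cs ->
      dval dKL theta mu win c <=
      dval dKL theta mu win (nth (cstar (Node b cs)) cs (Leaf 0)).

Definition arb_valid (arb : tree -> nat -> R) (root : tree) : Prop :=
  forall b cs, In (Node b cs) (subtrees root) ->
    (forall l, In l (leaves (Node b cs)) -> 0 <= arb (Node b cs) l) /\
    fold_right Rplus 0 (map (arb (Node b cs)) (leaves (Node b cs))) = 1.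

(* Main.v *)
Require Import Defs.
From Stdlib Require Import Reals List Arith Lra Lia.
Import ListNotations.
Open Scope R_scope.

Definition tree_ind' (P : tree -> Prop) (HL : forall l, P (Leaf l))
  (HN : forall b cs, (forall c, In c cs -> P c) -> P (Node b cs)) : forall t, P t :=
  fix F t := match t with
  | Leaf l => HL l
  | Node b cs => HN b cs ((fix G (l : list tree) : forall c, In c l -> P c :=
       match l with
       | [] => fun c H => False_ind _ H
       | x :: l' => fun c H => match H with
                   | or_introl e => eq_ind x P (F x) c e
                   | or_intror H' => G l' c H' end
       end) cs)
  end.

Lemma fold_max_ge : forall l x, x <= fold_left Rmax l x /\
  forall y, In y l -> y <= fold_left Rmax l x.
Proof.
  induction l as [|a l IH]; intros x; simpl.
  - split; [lra| tauto].
  - destruct (IH (Rmax x a)) as [H1 H2].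
    pose proof (Rmax_l x a); pose proof (Rmax_r x a).
    split; [lra|]. intros y [<-|Hy]; [lra| auto].
Qed.

Lemma fold_max_in : forall l x, fold_left Rmax l x = x \/ In (fold_left Rmax l x) l.
Proof.
  induction l as [|a l IH]; intros x; simpl; [auto|].
  destruct (IH (Rmax x a)) as [H|H]; [|auto].
  rewrite H. unfold Rmax. destruct (Rle_dec x a); auto.
Qed.

Lemma fold_min_le : forall l x, fold_left Rmin l x <= x /\
  forall y, In y l -> fold_left Rmin l x <= y.
Proof.
  induction l as [|a l IH]; intros x; simpl.
  - split; [lra| tauto].
  - destruct (IH (Rmin x a)) as [H1 H2].
    pose proof (Rmin_l x a); pose proof (Rmin_r x a).
    split; [lra|]. intros y [<-|Hy]; [lra| auto].
Qed.

Lemma fold_min_in : forall l x, fold_left Rmin l x = x \/ In (fold_left Rmin l x) l.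
Proof.
  induction l as [|a l IH]; intros x; simpl; [auto|].
  destruct (IH (Rmin x a)) as [H|H]; [|auto].
  rewrite H. unfold Rmin. destruct (Rle_dec x a); auto.
Qed.

Lemma maxlist_ge : forall l y, In y l -> y <= maxlist l.
Proof.
  intros [|a l] y Hy; [destruct Hy|]. simpl.
  destruct (fold_max_ge l a) as [H1 H2]. destruct Hy as [<-|Hy]; auto.
Qed.

Lemma maxlist_in : forall l, l <> [] -> In (maxlist l) l.
Proof.
  intros [|a l] Hl; [congruence|]. simpl.
  destruct (fold_max_in l a) as [H|H]; auto.
Qed.

Lemma minlist_le : forall l y, In y l -> minlist l <= y.
Proof.
  intros [|a l] y Hy; [destruct Hy|]. simpl.
  destruct (fold_min_le l a) as [H1 H2]. destruct Hy as [<-|Hy]; auto.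
Qed.

Lemma minlist_in : forall l, l <> [] -> In (minlist l) l.
Proof.
  intros [|a l] Hl; [congruence|]. simpl.
  destruct (fold_min_in l a) as [H|H]; auto.
Qed.

Lemma sum_pos_exists : forall l, 0 < fold_right Rplus 0 l -> exists x, In x l /\ 0 < x.
Proof.
  induction l as [|a l IH]; simpl; intros H; [lra|].
  destruct (Rlt_dec 0 a) as [Ha|Ha]; [eauto|].
  destruct IH as [x [Hx Hx']]; [lra|eauto].
Qed.

Lemma sum_pos : forall l, l <> [] -> (forall x, In x l -> 0 < x) -> 0 < fold_right Rplus 0 l.
Proof.
  induction l as [|a l IH]; simpl; intros Hn H; [congruence|].
  destruct l as [|b l].
  - simpl. specialize (H a (or_introl eq_refl)). lra.
  - assert (0 < a) by auto. assert (0 < fold_right Rplus 0 (b :: l)).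
    { apply IH; [congruence| auto]. }
    lra.
Qed.

Lemma sum_nonneg : forall l, (forall x, In x l -> 0 <= x) -> 0 <= fold_right Rplus 0 l.
Proof.
  induction l as [|a l IH]; simpl; intros H; [lra|].
  assert (0 <= a) by auto. assert (0 <= fold_right Rplus 0 l) by auto. lra.
Qed.

Lemma combine_map {A B C : Type} (f : A -> B) (g : A -> C) (l : list A) :
  combine (map f l) (map g l) = map (fun x => (f x, g x)) l.
Proof. induction l; simpl; congruence. Qed.

Lemma rpos_iff x : rpos x = true <-> 0 < x.
Proof. unfold rpos; destruct (Rlt_dec 0 x); split; intros; auto; congruence. Qed.

Lemma wf_node b cs : well_formed (Node b cs) -> cs <> [] /\ forall c, In c cs -> well_formed c.
Proof.
  simpl. intros [Hn H]. split; auto.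
  clear Hn. induction cs as [|a cs IH]; simpl in *; [tauto|].
  destruct H as [H1 H2]. intros c [<-|Hc]; auto.
Qed.

Lemma leaves_child b cs c l : In c cs -> In l (leaves c) -> In l (leaves (Node b cs)).
Proof. intros Hc Hl. simpl. apply in_flat_map. eauto. Qed.

Lemma subtrees_child b cs c t : In c cs -> In t (subtrees c) -> In t (subtrees (Node b cs)).
Proof. intros Hc Ht. simpl. right. apply in_flat_map. eauto. Qed.

Lemma key (X : R -> Prop) (dKL : R -> R -> R)
  (hd_zero : forall x y, X x -> X y -> (dKL x y = 0 <-> x = y))
  (theta : R) (htheta : X theta) (mu : nat -> R) (win : bool)
  (cstar : tree -> nat) (arb : tree -> nat -> R) :
  forall t, (forall l, In l (leaves t) -> X (mu l)) ->
  (forall b cs, In (Node b cs) (subtrees t) -> b = Plab win ->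
    (cstar (Node b cs) < length cs)%nat /\
    forall c, In c cs ->
      dval dKL theta mu win c <=
      dval dKL theta mu win (nth (cstar (Node b cs)) cs (Leaf 0))) ->
  0 < dval dKL theta mu win t ->
  forall l, In l (leaves t) -> 0 < weights dKL theta mu win cstar arb t l ->
  (win = true -> theta < mu l) /\ (win = false -> mu l < theta).
Proof.
  induction t as [l0|b cs IH] using tree_ind'; intros HX Hc Hd l Hl Hw.
  - simpl in Hl. destruct Hl as [<-|[]].
    assert (HX0 : X (mu l0)) by (apply HX; simpl; auto).
    simpl in Hd. destruct win.
    + destruct (Rle_dec theta (mu l0)); [|lra].
      split; [|discriminate]. intros _.
      destruct (Req_dec (mu l0) theta) as [E|E]; [|lra].
      apply (hd_zero _ _ HX0 htheta) in E. lra.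
    + destruct (Rlt_dec (mu l0) theta); [|lra]. split; [discriminate|auto].
  - cbn [weights] in Hw.
    match type of Hw with context [Rlt_dec 0 ?x] => destruct (Rlt_dec 0 x) as [Hp|Hp] end;
      [|contradiction].
    cbn [dval] in Hd.
    destruct (label_eqb b (Plab win)) eqn:Hb.
    + assert (Hbe : b = Plab win) by (destruct b, win; simpl in *; congruence).
      destruct (Hc b cs) as [Hk Hmax]; [simpl; auto|auto|].
      set (k := cstar (Node b cs)) in *.
      rewrite (nth_indep _ [] (leaves (Leaf 0))) in Hw by (rewrite length_map; auto).
      rewrite (nth_indep _ (fun _ => 0) (weights dKL theta mu win cstar arb (Leaf 0))) in Hw
        by (rewrite length_map; auto).
      rewrite !map_nth in Hw.
      assert (Hin : In (nth k cs (Leaf 0)) cs) by (apply nth_In; auto).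
      destruct (in_dec Nat.eq_dec l (leaves (nth k cs (Leaf 0)))) as [Hl'|Hl']; [|lra].
      apply (IH _ Hin); auto.
      * intros l1 H1. apply HX. eapply leaves_child; eauto.
      * intros b' cs' H1. apply Hc. eapply subtrees_child; eauto.
      * assert (Hne : map (dval dKL theta mu win) cs <> []).
        { destruct cs; simpl in *; [lia|congruence]. }
        pose proof (maxlist_in _ Hne) as Hm. apply in_map_iff in Hm.
        destruct Hm as [c' [Hc' Hc'in]]. specialize (Hmax c' Hc'in). lra.
    + destruct (forallb rpos (map (dval dKL theta mu win) cs)) eqn:Hf; [|lra].
      rewrite forallb_forall in Hf.
      assert (Hdc : forall c, In c cs -> 0 < dval dKL theta mu win c).
      { intros c Hc0. apply rpos_iff, Hf, in_map; auto. }
      rewrite combine_map in Hw.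
      rewrite (combine_map (fun x => (leaves x, weights dKL theta mu win cstar arb x))
                 (dval dKL theta mu win)) in Hw.
      rewrite map_map in Hw.
      set (y := fold_right Rplus 0 (map Rinv (map (dval dKL theta mu win) cs))) in Hw.
      assert (Hy0 : 0 <= y).
      { apply sum_nonneg. intros x Hx. rewrite map_map in Hx.
        apply in_map_iff in Hx. destruct Hx as [c [<- Hc0]].
        left. apply Rinv_0_lt_compat; auto. }
      destruct (Req_dec y 0) as [Ey|Ey].
      { rewrite Ey in Hw. unfold Rdiv in Hw. rewrite Rinv_0, Rmult_0_r in Hw. lra. }
      assert (Hiy : 0 < / y) by (apply Rinv_0_lt_compat; lra).
      unfold Rdiv in Hw at 1.
      match type of Hw with 0 < ?x * _ => assert (Hx : 0 < x) by
        (destruct (Rle_lt_dec x 0); [nra|lra]) end.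
      apply sum_pos_exists in Hx. destruct Hx as [z [Hz Hz0]].
      apply in_map_iff in Hz. destruct Hz as [c [<- Hcin]].
      destruct (in_dec Nat.eq_dec l (leaves c)) as [Hl'|Hl']; [|lra].
      pose proof (Hdc c Hcin) as Hdc0.
      assert (Hiv : 0 < / dval dKL theta mu win c) by (apply Rinv_0_lt_compat; auto).
      unfold Rdiv in Hz0.
      apply (IH _ Hcin); auto.
      * intros l1 H1. apply HX. eapply leaves_child; eauto.
      * intros b' cs' H1. apply Hc. eapply subtrees_child; eauto.
      * destruct (Rle_lt_dec (weights dKL theta mu win cstar arb c l) 0); [nra|lra].
Qed.

Lemma dpos (X : R -> Prop) (dKL : R -> R -> R)
  (hd_nonneg : forall x y, X x -> X y -> 0 <= dKL x y)
  (hd_zero : forall x y, X x -> X y -> (dKL x y = 0 <-> x = y))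
  (theta : R) (htheta : X theta) (mu : nat -> R) (win : bool) :
  forall t, well_formed t -> (forall l, In l (leaves t) -> X (mu l)) ->
  (win = true -> theta < value mu t) -> (win = false -> value mu t < theta) ->
  0 < dval dKL theta mu win t.
Proof.
  induction t as [l0|b cs IH] using tree_ind'; intros Hwf HX H1 H2.
  - assert (HX0 : X (mu l0)) by (apply HX; simpl; auto).
    simpl in *.
    assert (Hne : mu l0 <> theta -> 0 < dKL (mu l0) theta).
    { intros Hn. pose proof (hd_nonneg _ _ HX0 htheta).
      destruct (Req_dec (dKL (mu l0) theta) 0) as [E|E]; [|lra].
      apply (hd_zero _ _ HX0 htheta) in E. contradiction. }
    destruct win.
    + specialize (H1 eq_refl). destruct (Rle_dec theta (mu l0)); [|lra]. apply Hne; lra.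
    + specialize (H2 eq_refl). destruct (Rlt_dec (mu l0) theta); [|lra]. apply Hne; lra.
  - apply wf_node in Hwf. destruct Hwf as [Hne Hwf].
    assert (HXc : forall c, In c cs -> forall l, In l (leaves c) -> X (mu l)).
    { intros c Hc l Hl. apply HX. eapply leaves_child; eauto. }
    assert (Hnev : forall f : tree -> R, map f cs <> []).
    { intros f. destruct cs; simpl; congruence. }
    assert (Qcase : (forall c, In c cs -> 0 < dval dKL theta mu win c) ->
      0 < (if forallb rpos (map (dval dKL theta mu win) cs)
           then / fold_right Rplus 0 (map Rinv (map (dval dKL theta mu win) cs)) else 0)).
    { intros Hall.
      assert (Hf : forallb rpos (map (dval dKL theta mu win) cs) = true).
      { apply forallb_forall. intros x Hx. apply in_map_iff in Hx.
        destruct Hx as [c [<- Hc]]. apply rpos_iff; auto. }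
      rewrite Hf. apply Rinv_0_lt_compat, sum_pos; [rewrite map_map; apply Hnev|].
      intros x Hx. rewrite map_map in Hx. apply in_map_iff in Hx.
      destruct Hx as [c [<- Hc]]. apply Rinv_0_lt_compat; auto. }
    assert (Pcase : (exists c, In c cs /\ 0 < dval dKL theta mu win c) ->
      0 < maxlist (map (dval dKL theta mu win) cs)).
    { intros [c [Hc Hc0]]. eapply Rlt_le_trans; [exact Hc0|].
      apply maxlist_ge, in_map; auto. }
    destruct b, win; cbn [dval value Plab label_eqb] in *.
    + apply Pcase.
      specialize (H1 eq_refl). pose proof (maxlist_in _ (Hnev (value mu))) as Hm.
      apply in_map_iff in Hm. destruct Hm as [c [Hc Hcin]].
      exists c. split; auto. apply IH; [auto|auto|apply HXc; auto|intros; try discriminate; try lra..].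
    + apply Qcase. intros c Hc. apply IH; [auto|auto|apply HXc; auto|intros; try discriminate..]. specialize (H2 eq_refl).
      pose proof (maxlist_ge _ _ (in_map (value mu) _ _ Hc)). lra.
    + apply Qcase. intros c Hc. apply IH; [auto|auto|apply HXc; auto|intros; try discriminate..]. specialize (H1 eq_refl).
      pose proof (minlist_le _ _ (in_map (value mu) _ _ Hc)). lra.
    + apply Pcase.
      specialize (H2 eq_refl). pose proof (minlist_in _ (Hnev (value mu))) as Hm.
      apply in_map_iff in Hm. destruct Hm as [c [Hc Hcin]].
      exists c. split; auto. apply IH; [auto|auto|apply HXc; auto|intros; try discriminate; try lra..].
Qed.

Theorem proposition1
  (X : R -> Prop) (dKL : R -> R -> R)
  (hd_nonneg : forall x y, X x -> X y -> 0 <= dKL x y)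
  (hd_zero : forall x y, X x -> X y -> (dKL x y = 0 <-> x = y))
  (theta : R) (htheta : X theta)
  (T : tree) (hwf : well_formed T) (hnodup : NoDup (leaves T))
  (mu : nat -> R) (hmu : forall l, In l (leaves T) -> X (mu l))
  (hV : value mu T <> theta)
  (cstar : tree -> nat) (arb : tree -> nat -> R)
  (win : bool) (hwin : win = true <-> theta <= value mu T)
  (hcstar : cstar_valid dKL theta mu win cstar T)
  (harb : arb_valid arb T) :
  forall l, In l (leaves T) ->
    0 < weights dKL theta mu win cstar arb T l ->
    (win = true -> theta < mu l) /\ (win = false -> mu l < theta).
Proof.
  intros l Hl Hw.
  apply (key X dKL hd_zero theta htheta mu win cstar arb T hmu hcstar); auto.
  apply (dpos X dKL hd_nonneg hd_zero theta htheta mu win T hwf hmu).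
  - intros E. apply hwin in E. lra.
  - intros E. destruct (Rle_lt_dec theta (value mu T)) as [H|H]; auto.
    apply hwin in H. congruence.
Qed.
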